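(* Let $\mathbf{x}=(x_1,\dots,x_n)$, and let $u(\mathbf{x},g(\mathbf{x}))$ be a multivariate constrained expression built by recursively substituting univariate constrained expressions ${}^{k}u(\mathbf{x},g)=g+\sum_j {}^{k}\phi_j(x_k)\,{}^{k}\rho_j(\mathbf{x},g)$, $k=1,\dots,n$, into one another (each used once, the innermost using the free function $g$). Then for a given function $f:\mathbb{R}^n\to\mathbb{R}$ satisfying the constraints, the free function $g$ with $u(\mathbf{x},g(\mathbf{x}))=f(\mathbf{x})$ is not unique. In other words, multivariate constrained expressions are not injective functionals from the set of all free functions to the set of all functions satisfying the constraints.
   Context: For each $k$ there are linear constraints ${}^{k}\mathcal{C}_j[u]={}^{k}\kappa_j$, $j=1,\dots,\ell_k$ (with at least one constraint in total), where ${}^{k}\mathcal{C}_j$ is a linear operator associated with the $k$-th independent variable returning the operand function evaluated in the way the dependent variable appears in that constraint, and ${}^{k}\kappa_j$ does not depend on $x_k$. The projection functionals are ${}^{k}\rho_j(\mathbf{x},g)={}^{k}\kappa_j-{}^{k}\mathcal{C}_j[g]$, and the switching functions are ${}^{k}\phi_j(x_k)=\sum_m {}^{k}s_m(x_k)\alpha^{(k)}_{mj}$, where ${}^{k}s_m$ are support functions of $x_k$ and $\alpha^{(k)}$ is the inverse of the support matrix $\mathbb{S}^{(k)}_{im}={}^{k}\mathcal{C}_i[{}^{k}s_m]$, so that ${}^{k}\mathcal{C}_i[{}^{k}\phi_j]=\delta_{ij}$. A free function is any $g:\mathbb{R}^n\to\mathbb{R}$ for which all constraint operators (and compositions with at most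 one operator per variable) appearing in the construction are defined. *)

(* Defs.v *)
From mathcomp Require Import all_boot all_algebra.
From mathcomp Require Import reals.
Set Implicit Arguments.
Unset Strict Implicit.
Unset Printing Implicit Defensive.
Import GRing.Theory Num.Theory.
Local Open Scope ring_scope.

Section TFC.
Variable R : realType.
Variable n : nat.

Definition point := 'I_n -> R.

Definition upd (x : point) (k : 'I_n) (t : R) : point :=
  fun i => if i == k then t else x i.

Definition slice (g : point -> R) (x : point) (k : 'I_n) : R -> R :=
  fun t => g (upd x k t).

Definition fsubspace (D : (R -> R) -> Prop) : Prop :=
  D (fun _ => 0) /\
  forall (a : R) u v, D u -> D v -> D (fun t => a * u t + v t).

Definition linear_on (D : (R -> R) -> Prop) (L : (R -> R) -> R) : Prop :=
  forall (a : R) u v, D u -> D v -> L (fun t => a * u t + v t) = a * L u + L v.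

(* For the k-th variable there are ell k constraints.
   The constraint operator kC_j acts on u : R^n -> R by applying the linear
   functional Lf k j (defined on the subspace Dom k j) to the slice of u in
   the variable x_k:  kC_j[u](x) = Lf k j (t |-> u(x[x_k := t])).
   (This is "the operand function evaluated in the way the dependent variable
   appears in the constraint", e.g. u(x_k=p), d/dx_k u(x_k=p), int u dx_k.) *)
Variable ell : 'I_n -> nat.
Variable Lf : forall k : 'I_n, 'I_(ell k) -> (R -> R) -> R.
Variable s : forall k : 'I_n, 'I_(ell k) -> R -> R.
Variable kappa : forall k : 'I_n, 'I_(ell k) -> point -> R.

Definition Cop (k : 'I_n) (j : 'I_(ell k)) (g : point -> R) : point -> R :=
  fun x => @Lf k j (slice g x k).

Definition support_matrix (k : 'I_n) : 'M[R]_(ell k) :=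
  \matrix_(i, m) @Lf k i (@s k m).

Definition phi (k : 'I_n) (j : 'I_(ell k)) (t : R) : R :=
  \sum_m @s k m t * invmx (support_matrix k) m j.

Definition rho (k : 'I_n) (j : 'I_(ell k)) (g : point -> R) (x : point) : R :=
  @kappa k j x - @Cop k j g x.

Definition uk (k : 'I_n) (g : point -> R) : point -> R :=
  fun x => g x + \sum_j @phi k j (x k) * @rho k j g x.

Definition ucon (ord : seq 'I_n) (g : point -> R) : point -> R :=
  foldr (fun k acc => uk k acc) g ord.

Definition in_domains (Dom : forall k : 'I_n, 'I_(ell k) -> (R -> R) -> Prop)
  (g : point -> R) : Prop :=
  forall k j x, Dom k j (slice g x k).

Fixpoint free_fun (Dom : forall k : 'I_n, 'I_(ell k) -> (R -> R) -> Prop)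
  (ord : seq 'I_n) (g : point -> R) : Prop :=
  match ord with
  | [::] => in_domains Dom g
  | k :: o => in_domains Dom (ucon (k :: o) g) /\ free_fun Dom o g
  end.

Definition satisfies_constraints (f : point -> R) : Prop :=
  forall k j x, @Cop k j f x = @kappa k j x.

End TFC.

(* Main.v *)
Require Import Defs.
From mathcomp Require Import all_boot all_algebra.
From mathcomp Require Import reals.
From Stdlib Require Import Classical FunctionalExtensionality.
Import GRing.Theory Num.Theory.
Local Open Scope ring_scope.

Theorem theorem8 (R : realType) (n : nat)
  (ell : 'I_n -> nat)
  (Lf : forall k : 'I_n, 'I_(ell k) -> (R -> R) -> R)
  (Dom : forall k : 'I_n, 'I_(ell k) -> (R -> R) -> Prop)
  (s : forall k : 'I_n, 'I_(ell k) -> R -> R)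
  (kappa : forall k : 'I_n, 'I_(ell k) -> point R n -> R)
  (ord : seq 'I_n) (f : point R n -> R) :
  perm_eq ord (enum 'I_n) ->
  (exists k, (0 < ell k)%N) ->
  (forall k j, fsubspace (Dom k j)) ->
  (forall k j, linear_on (Dom k j) (Lf k j)) ->
  (forall k j m, Dom k j (s k m)) ->
  (forall k, support_matrix Lf s k \in unitmx) ->
  (forall k j x t, kappa k j (upd x k t) = kappa k j x) ->
  in_domains Dom f ->
  satisfies_constraints Lf kappa f ->
  exists g1 g2 : point R n -> R,
    [/\ free_fun Lf s kappa Dom ord g1, free_fun Lf s kappa Dom ord g2,
        g1 <> g2,
        ucon Lf s kappa ord g1 = f & ucon Lf s kappa ord g2 = f].
Proof.
move=> Hperm [k0 Hk0] Hsub Hlin Hs Hunit _ Hdf Hsat.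
pose A k := support_matrix Lf s k.
have HAA : forall k (m m' : 'I_(ell k)),
    \sum_j invmx (A k) m j * Lf k j (s k m') = (m == m')%:R.
  move=> k m m'.
  have := congr1 (fun M : 'M[R]_(ell k) => M m m') (mulVmx (Hunit k)).
  by rewrite /= !mxE => <-; apply: eq_bigr => j _; rewrite /A /support_matrix mxE.
have L0 : forall k j, Lf k j (fun _ => 0) = 0.
  move=> k j.
  have := Hlin k j 1 (fun _ => 0) (fun _ => 0) (Hsub k j).1 (Hsub k j).1.
  have -> : (fun t : R => 1 * (fun _ : R => (0:R)) t + (fun _ : R => (0:R)) t) = (fun _ : R => (0:R)).
    by apply: functional_extensionality => t; rewrite mulr0 addr0.
  rewrite mul1r => E; apply/esym/(addrI (Lf k j (fun _ => 0))); by rewrite addr0 {1}E.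
pose psi (k : 'I_n) (t : R) : R :=
  if (0 < ell k)%N then \sum_(m : 'I_(ell k) | val m == 0%N) s k m t else 1.
have psi_s : forall k (H : (0 < ell k)%N) t, psi k t = s k (Ordinal H) t.
  move=> k H t; rewrite /psi H (big_pred1 (Ordinal H)) // => m; rewrite /= -val_eqE.
pose h (x : point R n) : R := \prod_i psi i (x i).
have hslice : forall x k t, h (upd x k t) = psi k t * \prod_(i | i != k) psi i (x i).
  move=> x k t; rewrite /h (bigD1 k) //= /upd eqxx; congr (_ * _).
  by apply: eq_bigr => i /negbTE ->.
have updxx : forall (x : point R n) k, upd x k (x k) = x.
  move=> x k; apply: functional_extensionality => i; rewrite /upd.
  by case: eqP => [->|].
pose g2 := fun x => f x + h x.
have slice_g2 : forall k (H : (0 < ell k)%N) x,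
    slice g2 x k = (fun t => (\prod_(i | i != k) psi i (x i)) * s k (Ordinal H) t
                             + slice f x k t).
  move=> k H x; apply: functional_extensionality => t.
  by rewrite /slice /g2 hslice psi_s mulrC addrC.
have uk_f : forall k, uk Lf s kappa k f = f.
  move=> k; apply: functional_extensionality => x.
  rewrite /uk big1 ?addr0 // => j _.
  by rewrite /rho Hsat subrr mulr0.
have uk_0 : forall k g, ell k = 0%N -> uk Lf s kappa k g = g.
  move=> k g Hz; apply: functional_extensionality => x.
  rewrite /uk big1 ?addr0 // => j _.
  by have : (j < 0)%N by rewrite -Hz ltn_ord.
have uk_g2 : forall k, (0 < ell k)%N -> uk Lf s kappa k g2 = f.
  move=> k H; apply: functional_extensionality => x.
  set c := \prod_(i | i != k) psi i (x i).
  rewrite /uk.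
  have E : forall j, rho Lf kappa j g2 x = - (c * Lf k j (s k (Ordinal H))).
    move=> j; rewrite /rho /Cop slice_g2 Hlin ?Hs //.
    by rewrite -/(Cop Lf j f x) Hsat opprD addrCA subrr addr0.
  rewrite (eq_bigr (fun j => - (c * (phi Lf s j (x k) * Lf k j (s k (Ordinal H))))));
    last by move=> j _; rewrite E mulrN mulrCA.
  rewrite sumrN -mulr_sumr.
  have -> : \sum_j phi Lf s j (x k) * Lf k j (s k (Ordinal H)) = s k (Ordinal H) (x k).
    rewrite /phi.
    rewrite (eq_bigr (fun j => \sum_m s k m (x k) * (invmx (support_matrix Lf s k) m j
                                  * Lf k j (s k (Ordinal H))))); last first.
      by move=> j _; rewrite mulr_suml; apply: eq_bigr => m _; rewrite mulrA.
    rewrite exchange_big /=.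
    rewrite (eq_bigr (fun m => s k m (x k) * (m == Ordinal H)%:R)); last first.
      by move=> m _; rewrite -mulr_sumr HAA.
    rewrite (bigD1 (Ordinal H)) //= mulr1 big1 ?addr0 // => m /negbTE ->.
    by rewrite mulr0.
  rewrite /g2 -{2}(updxx x k) hslice psi_s -/c.
  by rewrite mulrC -addrA subrr addr0.
have ucon_f : forall o, ucon Lf s kappa o f = f.
  by elim=> [//|k o IH] /=; rewrite IH uk_f.
have ucon_g2 : forall o, ucon Lf s kappa o g2 =
    if has (fun k => (0 < ell k)%N) o then f else g2.
  elim=> [//|k o IH] /=; rewrite IH.
  case: (has _ o); first by rewrite orbT uk_f.
  rewrite orbF; case: ifP => Hk; first exact: uk_g2.
  by apply: uk_0; move/negbT: Hk; rewrite lt0n negbK => /eqP.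
have dom_g2 : in_domains Dom g2.
  move=> k j x.
  have H : (0 < ell k)%N := leq_ltn_trans (leq0n _) (ltn_ord j).
  rewrite slice_g2; exact: (Hsub k j).2.
have ff_f : forall o, free_fun Lf s kappa Dom o f.
  elim=> [//|k o IH]; split=> //.
  by change (in_domains Dom (ucon Lf s kappa (k :: o) f)); rewrite ucon_f.
have ff_g2 : forall o, free_fun Lf s kappa Dom o g2.
  elim=> [//|k o IH]; split=> //.
  by change (in_domains Dom (ucon Lf s kappa (k :: o) g2)); rewrite ucon_g2; case: ifP.
have Hhas : has (fun k => (0 < ell k)%N) ord.
  apply/hasP; exists k0 => //; by rewrite (perm_mem Hperm) mem_enum.
have exP : forall i, exists t, psi i t != 0.
  move=> i; case: (boolP (0 < ell i)%N) => H; last first.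
    by exists 0; rewrite /psi (negbTE H) oner_neq0.
  apply: NNPP => Hn.
  have Z : s i (Ordinal H) = (fun _ : R => (0:R)).
    apply: functional_extensionality => t; apply/eqP; apply: contraT => Ht.
    by case: Hn; exists t; rewrite psi_s.
  have := HAA i (Ordinal H) (Ordinal H).
  rewrite eqxx big1 ?Z => [|j _]; last by rewrite L0 mulr0.
  by move/eqP; rewrite eq_sym oner_eq0.
exists f, g2; split; [exact: ff_f | exact: ff_g2 | | exact: ucon_f |].
  2: by rewrite ucon_g2 Hhas.
pose x := fun i => xchoose (exP i).
move=> Efg.
have : h x != 0.
  apply/prodf_neq0 => i _; exact: (xchooseP (exP i)).
have := congr1 (fun g => g x) Efg; rewrite /g2 /= => /eqP.
by rewrite -subr_eq0 opprD addrA subrr add0r oppr_eq0 => /eqP ->; rewrite eqxx.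
Qed.
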